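(* Let $H=H_1\times R$ be a connected non-trivial core such that $H_1$ is truly projective and $R\not\cong K_1^*$, and let $w\in V(R)$. Then there exist a graph $F$ and vertices $u^*,v^*\in V(F)$ such that: (a) for every edge $xy\in E(H_1)$ there is a homomorphism $f\colon F\to H$ with $f(u^* )=(x,w)$ and $f(v^* )=(y,w)$; (b) for every homomorphism $f\colon F\to H$, writing $f_1=\pi_1\circ f$ for the first coordinate of $f$ (with values in $V(H_1)$), we have $f_1(u^* )f_1(v^* )\in E(H_1)$.
   Context: Graphs are finite, undirected, without parallel edges, loops allowed; $K_1^*$ is the one-vertex graph with a loop. A homomorphism is an edge-preserving vertex map. A core is a graph with no homomorphism to a proper subgraph of itself; it is trivial if isomorphic to $K_1$, $K_1^*$ or $K_2$, non-trivial otherwise. Graphs $G,H$ are incomparable if there is no homomorphism $G\to H$ and none $H\to G$. The direct product $H_1\times H_2$ has vertex set $V(H_1)\times V(H_2)$ with $(x_1,y_1)(x_2,y_2)$ an edge iff $x_1x_2\in E(H_1)$ and $y_1y_2\in E(H_2)$; $H^m$ is the $m$-fold product and $\pi_i$ the $i$-th coordinate projection. $H$ is truly projective if it has at least three vertices and for every $s\ge2$ and every connected core $W$ incomparable with $H$, every homomorphism $f\colon H^s\times W\to H$ satisfying $f(x,\dots,x,y)=x$ for all $x\in V(H)$, $y\in V(W)$ equals $\pi_i$ for some $i\in[s]$. *)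

(* Defs.v *)
From mathcomp Require Import all_boot.
Set Implicit Arguments. Unset Strict Implicit. Unset Printing Implicit Defensive.

Record graph := Graph {
  vert : finType;
  adj : rel vert;
  adj_sym : symmetric adj }.

Definition hom (G H : graph) (f : vert G -> vert H) : Prop :=
  forall x y, adj x y -> adj (f x) (f y).
Arguments hom : clear implicits.

Definition homexists (G H : graph) : Prop := exists f, hom G H f.

Definition incomparable (G H : graph) : Prop :=
  ~ homexists G H /\ ~ homexists H G.

Definition isomorphic (G H : graph) : Prop :=
  exists f : vert G -> vert H, bijective f /\ forall x y, adj (f x) (f y) = adj x y.

(* Core: no homomorphism to a proper subgraph (S, E'), where S is a vertex
   subset, E' a symmetric edge relation contained in adj with endpoints in S;
   proper means S <> V or E' <> E. *)
Definition core (G : graph) : Prop :=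
  forall (S : {set vert G}) (E' : rel (vert G)),
    symmetric E' ->
    (forall x y, E' x y -> adj x y) ->
    (forall x y, E' x y -> (x \in S) && (y \in S)) ->
    forall f : vert G -> vert G,
      (forall x, f x \in S) -> (forall x y, adj x y -> E' (f x) (f y)) ->
      S = setT /\ (forall x y, E' x y = adj x y).

Definition connected (G : graph) : Prop :=
  (0 < #|vert G|)%N /\ forall x y : vert G, connect (@adj G) x y.

Definition K1 : graph := @Graph unit (fun _ _ => false) (fun _ _ => erefl).
Definition K1s : graph := @Graph unit (fun _ _ => true) (fun _ _ => erefl).
Lemma K2_sym : symmetric (fun x y : bool => x != y).
Proof. by move=> x y; rewrite eq_sym. Qed.
Definition K2 : graph := @Graph bool (fun x y => x != y) K2_sym.

Definition trivial_graph (G : graph) : Prop :=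
  isomorphic G K1 \/ isomorphic G K1s \/ isomorphic G K2.

Definition prod_adj (G H : graph) : rel (vert G * vert H) :=
  fun p q => adj p.1 q.1 && adj p.2 q.2.
Arguments prod_adj : clear implicits.
Lemma prod_adj_sym (G H : graph) : symmetric (prod_adj G H).
Proof. by move=> p q; rewrite /prod_adj adj_sym [adj p.2 _]adj_sym. Qed.
Definition prodg (G H : graph) : graph :=
  @Graph (vert G * vert H)%type (prod_adj G H) (@prod_adj_sym G H).

Definition pow_adj (H : graph) (m : nat) : rel {ffun 'I_m -> vert H} :=
  fun f g => [forall i, adj (f i) (g i)].
Lemma pow_adj_sym H m : symmetric (@pow_adj H m).
Proof.
move=> f g; apply/forallP/forallP => E i; by rewrite adj_sym.
Qed.
Definition powg (H : graph) (m : nat) : graph :=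
  @Graph {ffun 'I_m -> vert H} (@pow_adj H m) (@pow_adj_sym H m).

Definition truly_projective (H : graph) : Prop :=
  (3 <= #|vert H|)%N /\
  forall (s : nat) (W : graph), (2 <= s)%N -> connected W -> core W ->
    incomparable W H ->
    forall f : vert (prodg (powg H s) W) -> vert H,
      hom (prodg (powg H s) W) H f ->
      (forall (x : vert H) (y : vert W), f ([ffun _ => x], y) = x) ->
      exists i : 'I_s, forall (p : {ffun 'I_s -> vert H}) (y : vert W),
        f (p, y) = p i.

(* Main.v *)
Require Import Defs.
From mathcomp Require Import all_boot zify.
Set Implicit Arguments. Unset Strict Implicit. Unset Printing Implicit Defensive.

Lemma core_surj (G : graph) (h : vert G -> vert G) : core G -> hom G G h ->
  (forall v, exists u, h u = v) /\
  (forall p q, adj p q -> exists x y, [/\ adj x y, h x = p & h y = q]).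
Proof.
move=> cG hh.
pose S := [set v | [exists u, h u == v]].
pose E' := [rel p q | [exists x, exists y, [&& adj x y, h x == p & h y == q]]].
have sE : symmetric E'.
  move=> p q /=; apply/existsP/existsP=> [[x /existsP [y /and3P [a b c]]]|[x /existsP [y /and3P [a b c]]]];
  exists y; apply/existsP; exists x; by rewrite adj_sym a b c.
have := cG S E' sE _ _ h _ _.
case.
- move=> p q /existsP [x /existsP [y /and3P [a /eqP <- /eqP <-]]]; exact: hh.
- move=> p q /existsP [x /existsP [y /and3P [a /eqP <- /eqP <-]]].
  by rewrite !inE; apply/andP; split; apply/existsP; [exists x|exists y].
- by move=> x; rewrite inE; apply/existsP; exists x.
- by move=> x y a; apply/existsP; exists x; apply/existsP; exists y; rewrite a !eqxx.
move=> ST EE; split.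
  move=> v; have : v \in S by rewrite ST inE.
  by rewrite inE => /existsP [u /eqP <-]; exists u.
move=> p q a; move: (EE p q); rewrite a => /existsP [x /existsP [y /and3P [b /eqP <- /eqP <-]]].
by exists x, y.
Qed.

Lemma connect_map (A B : finType) (e : rel A) (e' : rel B) (f : A -> B) :
  (forall u v, e u v -> e' (f u) (f v)) -> forall u v, connect e u v -> connect e' (f u) (f v).
Proof.
move=> H u v /connectP [p Hp ->]; elim: p u Hp => [|z p IH] u /=; first by rewrite connect0.
case/andP=> euz Hp; exact: connect_trans (connect1 (H _ _ euz)) (IH _ Hp).
Qed.

Lemma connect_edge (A : finType) (e : rel A) u v : u != v -> connect e u v -> exists x y, e x y.
Proof.
move=> nuv /connectP [[|z p] /= Hp Hv]; first by rewrite Hv eqxx in nuv.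
by case/andP: Hp => euz _; exists u, z.
Qed.

Lemma surj_bij (T : finType) (f : T -> T) : (forall v, exists u, f u = v) -> bijective f.
Proof.
move=> sf.
pose g v := odflt v [pick u | f u == v].
have gK : cancel g f.
  move=> v; rewrite /g; case: pickP => [u /eqP //|/= N].
  by case: (sf v) => u fu; move: (N u); rewrite fu eqxx.
have [h gh hg] := injF_bij (can_inj gK).
exists g => // x.
by rewrite -[x in g (f x)]hg gK hg.
Qed.

Lemma twin (H1 R : graph) (a a' : vert H1) (r0 : vert R) :
  core (prodg H1 R) -> (forall c, adj a c = adj a' c) -> a = a'.
Proof.
move=> cH tw.
pose t v := if v == a' then a else v.
have tl : forall u z, adj (t u) z = adj u z.
  by move=> u z; rewrite /t; case: eqP => [->|].
have th : hom (prodg H1 R) (prodg H1 R) (fun v => (t v.1, v.2)).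
  move=> [u y] [v y'] /andP [/= e1 e2]; apply/andP; split => //=.
  by rewrite tl adj_sym tl adj_sym.
have [[u y] E] := (core_surj cH th).1 (a', r0); case: E => E _.
by move: E; rewrite /t; case: eqP => // /eqP N E; rewrite E eqxx in N.
Qed.

Lemma psi_props (H1 R : graph) (psi : vert H1 -> vert R -> vert H1) :
  core (prodg H1 R) -> (forall a b y y', adj a b -> adj y y' -> adj (psi a y) (psi b y')) ->
  (forall y, bijective (psi ^~ y)) /\
  (forall a b y y', adj y y' -> adj (psi a y) (psi b y') -> adj a b).
Proof.
move=> cH ph.
pose N (v : vert (prodg H1 R)) : vert (prodg H1 R) := (psi v.1 v.2, v.2).
have hN : hom _ _ N.
  by move=> [a y] [b y'] /andP [/= e1 e2]; apply/andP; split => //=; apply: ph.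
have [sN eN] := core_surj cH hN.
have bij : forall y, bijective (psi ^~ y).
  move=> y; apply: surj_bij => c.
  by case: (sN (c, y)) => [[a y0] [E1 E2]]; exists a; rewrite -E1 E2.
split => // a b y y' e1 e2.
have /eN : adj (N (a, y)) (N (b, y')) by apply/andP.
move=> [[a1 z1] [[b1 z2] [/andP [/= e3 _] [E1 E2] [E3 E4]]]].
subst z1 z2.
have [g1 g1a _] := bij y; have [g2 g2a _] := bij y'.
by rewrite -(g1a a1) E1 g1a -(g2a b1) E3 g2a in e3.
Qed.

Lemma psi_odd (H1 R : graph) (psi : vert H1 -> vert R -> vert H1) (w : vert R) :
  core (prodg H1 R) -> 3 <= #|vert H1| -> connected R ->
  (exists p q : vert (prodg H1 R), adj p q) ->
  (forall a b y y', adj a b -> adj y y' -> adj (psi a y) (psi b y')) ->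
  forall a b, adj (psi a w) (psi b w) = adj a b.
Proof.
move=> cH c3 [_ cR] [p [q epq]] ph.
have [bij rev] := psi_props cH ph.
pose oddb y y' := [forall a, forall b, adj (psi a y) (psi b y') == adj a b].
have oddE : forall y y' a b, oddb y y' -> adj (psi a y) (psi b y') = adj a b.
  by move=> y y' a b /forallP /(_ a) /forallP /(_ b) /eqP.
have O1 : forall y y', adj y y' -> oddb y y'.
  move=> y y' e; apply/forallP => a; apply/forallP => b; apply/eqP; apply/idP/idP.
    exact: rev.
  by move=> e'; apply: ph.
have O2 : forall y y' y'', oddb y y' -> oddb y' y'' -> forall a, psi a y = psi a y''.
  move=> y y' y'' o1 o2 a; apply: (@twin H1 R _ _ y cH) => c.
  have [g _ gK] := bij y'.
  rewrite -(gK c) oddE //.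
  by rewrite adj_sym -(oddE _ _ _ _ o2) adj_sym.
have reach : forall y, (forall a, psi a w = psi a y) \/ oddb w y.
  move=> y; move/connectP: (cR w y) => [s Hs ->].
  have key : forall (s : seq (vert R)) (u : vert R), path (@adj R) u s -> (forall a, psi a w = psi a u) \/ oddb w u ->
     (forall a, psi a w = psi a (last u s)) \/ oddb w (last u s).
    elim=> [|z s0 IH] u //= /andP [euz Hs0] Pu; apply: IH Hs0 _.
  case: Pu => [Ew|Ow].
    right; apply/forallP => a; apply/forallP => b; apply/eqP.
    by rewrite Ew oddE //; apply: O1.
  by left; apply: O2 Ow (O1 _ _ euz).
  by apply: key Hs _; left.
case: (boolP (oddb w w)) => [Oww|NO]; first by move=> a b; apply: oddE.
exfalso.
pose col y := oddb w y.
have evo : forall y, (forall a, psi a w = psi a y) -> oddb w y -> oddb w w.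
  move=> y Ew Oy; apply/forallP => a; apply/forallP => b; apply/eqP.
  by rewrite [psi b w]Ew oddE.
have colE : forall y y', adj y y' -> col y != col y'.
  move=> y y' e; rewrite /col; case: (reach y) => [Ew|Ow].
    have -> : oddb w y' = true.
      apply/forallP => a; apply/forallP => b; apply/eqP.
      by rewrite Ew oddE //; apply: O1.
    by apply/negP => /eqP Oy; move: NO; rewrite (evo _ Ew Oy).
  rewrite Ow; apply/negP => /eqP/esym Oy'.
  by move: NO; rewrite (evo y' (O2 _ _ _ Ow (O1 _ _ e)) Oy').
pose K (v : vert (prodg H1 R)) := if col v.2 == col p.2 then p else q.
have cpq : col p.2 != col q.2 by apply: colE; case/andP: epq.
have hK : hom _ _ K.
  move=> u v euv; rewrite /K.
  have cuv : col u.2 != col v.2 by apply: colE; case/andP: euv.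
  case: (col u.2) (col v.2) (col p.2) cuv cpq => [] [] [] //= _ _; by rewrite (prod_adj_sym q p).
have [sK _] := core_surj cH hK.
have : #|vert H1| <= #|[set p.1; q.1]|.
  apply: subset_leq_card; apply/subsetP => a _.
  case: (sK (a, w)) => u; rewrite /K; case: ifP => _ E; by rewrite !inE -[a]/((a,w).1) -E eqxx ?orbT.
rewrite cards2; case: (p.1 != q.1) => /= le; move: (leq_trans c3 le) => //.
Qed.
Unset Implicit Arguments.

Theorem lemma17 (H1 R : graph) (w : vert R) :
  connected (prodg H1 R) -> core (prodg H1 R) -> ~ trivial_graph (prodg H1 R) ->
  truly_projective H1 -> ~ isomorphic R K1s ->
  exists (F : graph) (us vs : vert F),
    (forall x y : vert H1, adj x y ->
       exists f : vert F -> vert (prodg H1 R),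
         hom F (prodg H1 R) f /\ f us = (x, w) /\ f vs = (y, w)) /\
    (forall f : vert F -> vert (prodg H1 R),
       hom F (prodg H1 R) f -> adj (f us).1 (f vs).1).
Proof.
move=> [cH0 cHc] cH _ tp nK1s.
have c3 := tp.1.
case/card_gt0P: cH0 => p0 _.
have [a1 [a2 [_ _ a12]]] : exists a1 a2 : vert H1, [/\ a1 \in predT, a2 \in predT & a1 != a2].
  by apply/card_gt1P; apply: leq_trans c3.
have [p [q epq]] : exists p q : vert (prodg H1 R), adj p q.
  apply: (@connect_edge _ _ (a1, p0.2) (a2, p0.2)); last exact: cHc.
  by apply/negP => /eqP [] /eqP; apply/negP.
pose x0 := p.1; pose y0 := q.1.
have e0 : adj x0 y0 by case/andP: epq.
have connR : connected R.
  split; first by apply/card_gt0P; exists p0.2.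
  move=> r r'.
  have := @connect_map _ _ (@adj (prodg H1 R)) (@adj R) snd _ (a1, r) (a1, r') (cHc _ _).
  apply => u v /andP [] //.
have coreR : core R.
  move=> S E' sE sub inS g gS gE.
  pose SH := [set v : vert (prodg H1 R) | v.2 \in S].
  pose EH := [rel u v : vert (prodg H1 R) | adj u.1 v.1 && E' u.2 v.2].
  have := cH SH EH _ _ _ (fun v => (v.1, g v.2)) _ _.
  case.
  - by move=> u v /=; rewrite adj_sym sE.
  - move=> u v /andP [e1 e2]; apply/andP; split => //; exact: sub.
  - move=> u v /andP [_ e2]; rewrite !inE; exact: inS.
  - by move=> v; rewrite inE; exact: gS.
  - move=> u v /andP [e1 e2]; apply/andP; split => //=; exact: gE.
  move=> ST EE; split.
    apply/setP => r; rewrite inE.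
    have : (a1, r) \in SH by rewrite ST inE.
    by rewrite inE.
  move=> r r'; move: (EE (x0, r) (y0, r')); rewrite /= /prod_adj /= e0 /=.
  by [].
have incR : incomparable R H1.
  split.
  - case=> g hg.
    pose h (v : vert (prodg H1 R)) : vert (prodg H1 R) := (g v.2, v.2).
    have hh : hom _ _ h by move=> u v /andP [_ e]; apply/andP; split => //=; exact: hg.
    have [sh _] := core_surj cH hh.
    have Ea : forall a, a = g p0.2.
      by move=> a; case: (sh (a, p0.2)) => [[b r]] [<- <-].
    by move: a12; rewrite (Ea a1) (Ea a2) eqxx.
  - case=> g hg.
    pose h (v : vert (prodg H1 R)) : vert (prodg H1 R) := (v.1, g v.1).
    have hh : hom _ _ h by move=> u v /andP [e _]; apply/andP; split => //=; exact: hg.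
    have [sh _] := core_surj cH hh.
    have Er : forall r, r = g a1.
      by move=> r; case: (sh (a1, r)) => [[b r']] [-> <-].
    apply: nK1s; exists (fun _ => tt); split.
      by exists (fun _ => g a1) => [r|[]]; rewrite -?Er.
    move=> r r'; rewrite [r]Er [r']Er.
    case/andP: epq => _; by rewrite [p.2]Er [q.2]Er => ->.
pose s := #|{: vert H1 * vert H1}|.
have s2 : 2 <= s by rewrite /s card_prod; nia.
pose us : {ffun 'I_s -> vert H1} :=
  [ffun i => let e := (enum_val i : vert H1 * vert H1) in if adj e.1 e.2 then e.1 else x0].
pose vs : {ffun 'I_s -> vert H1} :=
  [ffun i => let e := (enum_val i : vert H1 * vert H1) in if adj e.1 e.2 then e.2 else y0].
have usvs : forall i, adj (us i) (vs i).
  by move=> i; rewrite !ffunE /=; case: ifP.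
pose F := prodg (powg H1 s) R.
exists F, (us, w), (vs, w); split.
  move=> x y exy.
  pose i : 'I_s := enum_rank (x, y).
  exists (fun v : vert F => ((v.1 i, v.2) : vert (prodg H1 R))); split.
    by move=> [u r] [v r'] /andP [/forallP e1 e2]; apply/andP; split => //=; exact: e1.
  by rewrite /= !ffunE /i enum_rankK /= exy.
move=> f hf.
pose psi a y := (f ([ffun _ => a], y)).1.
have ph : forall a b y y', adj a b -> adj y y' -> adj (psi a y) (psi b y').
  move=> a b y y' e ey.
  have : adj (f ([ffun _ => a], y)) (f ([ffun _ => b], y')).
    by apply: hf; apply/andP; split => //=; apply/forallP => i; rewrite !ffunE.
  by case/andP.
have [bij rev] := psi_props cH ph.
have odd := psi_odd w cH c3 connR (ex_intro _ p (ex_intro _ q epq)) ph.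
pose ginv y c := odflt c [pick a | psi a y == c].
have ginvK : forall y c, psi (ginv y c) y = c.
  move=> y c; rewrite /ginv; case: pickP => [u /eqP //|/= N].
  have [g _ gK] := bij y; by move: (N (g c)); rewrite gK eqxx.
have ginvK' : forall y a, ginv y (psi a y) = a.
  move=> y a; apply: (bij_inj (bij y)); exact: ginvK.
pose Phi (v : vert F) := ginv v.2 (f v).1.
have hPhi : hom F H1 Phi.
  move=> u v e; have := hf _ _ e; case/andP => e1 _.
  have ey : adj u.2 v.2 by case/andP: e.
  by apply: (rev _ _ u.2 v.2 ey); rewrite !ginvK.
have idem : forall (x : vert H1) (y : vert R), Phi ([ffun _ => x], y) = x.
  by move=> x y; rewrite /Phi /= ginvK'.
have [i Hi] := tp.2 s R s2 connR coreR incR Phi hPhi idem.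
have E1 : forall v : vert F, (f v).1 = psi (Phi v) v.2 by move=> v; rewrite ginvK.
by rewrite !E1 !Hi /= odd.
Qed.
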